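(* Let $N\ge1$, $n>0$, $k>0$, and $\gamma>0$, and suppose all $N$ channels have SNR $\gamma$. Then the optimization problem $$\max_{k_0,\dots,k_{N-1}}\prod_{i=0}^{N-1}\bigl(1-\epsilon(n,k_i,\gamma)\bigr)\quad\text{subject to }\sum_{i=0}^{N-1}k_i=k,\ k_i\ge0,$$ over real $k_i$ (equivalently, minimizing the message-splitting average AoI $\bar\Delta_{\mathrm{MS}}(n)$ over the message split) is solved by $\mathbf{k}^*=\left(\frac kN,\dots,\frac kN\right)$.
   Context: $Q(x)=\frac{1}{\sqrt{2\pi}}\int_x^\infty e^{-t^2/2}dt$ and $\epsilon(n,k,\gamma)=Q\!\left(\frac{\frac12\log_2(1+\gamma)-\frac kn}{\log_2(e)\sqrt{\frac{1}{2n}\left(1-\frac{1}{(1+\gamma)^2}\right)}}\right)$. In the message splitting (MS) scheme the $k$ message bits are split into fragments $k_0,\dots,k_{N-1}$ with $\sum k_i=k$, fragment $i$ is encoded with blocklength $n$ on channel $i$, the error probability is $\epsilon_{\mathrm{MS}}(n)=1-\prod_{i}(1-\epsilon(n,k_i,\gamma_i))$, and $\bar\Delta_{\mathrm{MS}}(n)=\frac{n(1+\epsilon_{\mathrm{MS}}(n))}{2(1-\epsilon_{\mathrm{MS}}(n))}+n$. *)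

(* Defs.v *)
From Stdlib Require Import Reals.
From Coquelicot Require Import Coquelicot.
Open Scope R_scope.

Definition Qfun (x : R) : R :=
  / sqrt (2 * PI) * RInt_gen (fun t => exp (- t ^ 2 / 2)) (at_point x) (Rbar_locally p_infty).

Definition log2 (x : R) : R := ln x / ln 2.

Definition eps (n : nat) (k gamma : R) : R :=
  Qfun ((/ 2 * log2 (1 + gamma) - k / INR n) /
        (log2 (exp 1) * sqrt (/ (2 * INR n) * (1 - / (1 + gamma) ^ 2)))).

Fixpoint sumN (N : nat) (f : nat -> R) : R :=
  match N with O => 0 | S m => sumN m f + f m end.
Fixpoint prodN (N : nat) (f : nat -> R) : R :=
  match N with O => 1 | S m => prodN m f * f m end.

(* Main.v *)
Require Import Defs.
From Stdlib Require Import Reals Lra Lia Psatz.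
From Coquelicot Require Import Coquelicot.
Open Scope R_scope.

Definition phi (t : R) : R := exp (- t ^ 2 / 2).
Definition P (x : R) : R := RInt phi 0 x.
Definition hf (u t : R) : R := exp (- (u ^ 2 * (1 + t ^ 2)) / 2) / (1 + t ^ 2).
Definition hh (x : R) : R := RInt (fun t => hf x t) 0 1.

Lemma exd_cont (f : R -> R) x : ex_derive f x -> continuous f x.
Proof. intros H. apply (ex_derive_continuous (K:=R_AbsRing) (V:=R_NormedModule)). exact H. Qed.

Lemma exri_cont (f : R -> R) a b : (forall z, Rmin a b <= z <= Rmax a b -> continuous f z) -> ex_RInt f a b.
Proof. intros H. apply (ex_RInt_continuous (V:=R_CompleteNormedModule)). exact H. Qed.

Lemma rint_correct (f : R -> R) a b : ex_RInt f a b -> is_RInt f a b (RInt f a b).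
Proof. intros H. apply (RInt_correct (V:=R_CompleteNormedModule)). exact H. Qed.

Lemma RInt_Rmult (f : R -> R) k a b : ex_RInt f a b -> RInt (fun t => k * f t) a b = k * RInt f a b.
Proof. intros H. apply (RInt_scal (V:=R_CompleteNormedModule)); auto. Qed.

Lemma RInt_lin (f : R -> R) u v a b : ex_RInt f (u * a + v) (u * b + v) ->
  RInt (fun y => u * f (u * y + v)) a b = RInt f (u * a + v) (u * b + v).
Proof. intros H. apply (RInt_comp_lin (V:=R_CompleteNormedModule)); auto. Qed.

Ltac Req := match goal with |- ?a = ?b => change (@eq R a b) end.

Lemma onept_pos t : 0 < 1 + t ^ 2.
Proof. nra. Qed.

Lemma phi_cont x : continuous phi x.
Proof. apply exd_cont. unfold phi. auto_derive. auto. Qed.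

Lemma phi_pos x : 0 < phi x.
Proof. apply exp_pos. Qed.

Lemma ex_RInt_phi a b : ex_RInt phi a b.
Proof. apply exri_cont. intros; apply phi_cont. Qed.

Lemma P_derive x : is_derive P x (phi x).
Proof.
  apply (is_derive_RInt phi P 0 x).
  - apply filter_forall. intros b. apply rint_correct. apply ex_RInt_phi.
  - apply phi_cont.
Qed.

Lemma hf_derive u t : is_derive (fun z => hf z t) u (- u * exp (- (u ^ 2 * (1 + t ^ 2)) / 2)).
Proof.
  unfold hf. assert (H := onept_pos t). auto_derive. 1: lra. change R in u. match goal with |- ?a = ?b => change (@eq R a b) end. replace (- (u ^ 2 * (1 + t ^ 2)) / 2) with (- (u * (u * 1) * (1 + t * (t * 1))) * / 2) by field. field. lra.
Qed.

Lemma Derive_hf u t : Derive (fun z : R => hf z t) u = - u * exp (- (u ^ 2 * (1 + t ^ 2)) / 2).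
Proof. apply is_derive_unique. apply hf_derive. Qed.

Lemma hf_cont u t : continuous (fun s => hf u s) t.
Proof.
  apply exd_cont. unfold hf. assert (H := onept_pos t). auto_derive. lra.
Qed.

Lemma ex_RInt_hf u a b : ex_RInt (fun t => hf u t) a b.
Proof. apply exri_cont. intros; apply hf_cont. Qed.

Lemma cont2 x t : continuity_2d_pt (fun u v => Derive (fun z => hf z v) u) x t.
Proof.
  apply continuity_2d_pt_ext with
    (f := fun u v => (- u) * exp ((- (u * u * (1 + v * v))) * / 2)).
  { intros u v. symmetry.
    replace (- (u * u * (1 + v * v)) * / 2) with (- (u ^ 2 * (1 + v ^ 2)) / 2) by field.
    apply is_derive_unique. apply hf_derive. }
  apply continuity_2d_pt_mult.
  - apply continuity_2d_pt_opp. apply continuity_2d_pt_id1.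
  - apply continuity_1d_2d_pt_comp.
    + apply derivable_continuous_pt. apply derivable_pt_exp.
    + apply continuity_2d_pt_mult; [|apply continuity_2d_pt_const].
      apply continuity_2d_pt_opp.
      apply continuity_2d_pt_mult.
      * apply continuity_2d_pt_mult; apply continuity_2d_pt_id1.
      * apply continuity_2d_pt_plus; [apply continuity_2d_pt_const|].
        apply continuity_2d_pt_mult; apply continuity_2d_pt_id2.
Qed.

Lemma hf_key x t : - x * exp (- (x ^ 2 * (1 + t ^ 2)) / 2) = (- phi x) * (x * phi (x * t + 0)).
Proof.
  unfold phi. replace (- (x ^ 2 * (1 + t ^ 2)) / 2) with (- x ^ 2 / 2 + - (x * t + 0) ^ 2 / 2) by field.
  rewrite exp_plus. ring.
Qed.

Lemma hh_derive x : is_derive hh x (- phi x * P x).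
Proof.
  unfold hh.
  assert (H : is_derive (fun x0 => RInt (fun t => hf x0 t) 0 1) x
     (RInt (fun t => Derive (fun u => hf u t) x) 0 1)).
  { apply (is_derive_RInt_param hf 0 1 x).
    - apply filter_forall. intros y t _. eexists. apply hf_derive.
    - intros; apply cont2.
    - apply filter_forall. intros y. apply ex_RInt_hf. }
  replace (- phi x * P x) with (RInt (fun t => Derive (fun u => hf u t) x) 0 1); auto.
  rewrite (RInt_ext _ (fun t => (- phi x) * (x * phi (x * t + 0)))).
  2:{ intros t _. rewrite Derive_hf. exact (hf_key x t). }
  rewrite RInt_Rmult.
  2:{ apply exri_cont. intros z _. apply exd_cont. unfold phi. auto_derive. auto. }
  rewrite RInt_lin. 2: apply ex_RInt_phi.
  unfold P. f_equal. f_equal; ring.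
Qed.

Lemma isd_plus (f g : R -> R) x df dg : is_derive f x df -> is_derive g x dg ->
  is_derive (fun t => f t + g t) x (df + dg).
Proof. intros. apply (is_derive_plus (K:=R_AbsRing) (V:=R_NormedModule)); auto. Qed.

Lemma isd_mult (f g : R -> R) x df dg : is_derive f x df -> is_derive g x dg ->
  is_derive (fun t => f t * g t) x (df * g x + f x * dg).
Proof. intros. apply (is_derive_mult (K:=R_AbsRing)); auto. intros; apply Rmult_comm. Qed.

Lemma isd_eq (f : R -> R) x l l' : is_derive f x l -> l = l' -> is_derive f x l'.
Proof. intros H ->; exact H. Qed.

Lemma F_const x : P x ^ 2 + 2 * hh x = P 0 ^ 2 + 2 * hh 0.
Proof.
  assert (D : forall y, is_derive (fun z => P z ^ 2 + 2 * hh z) y zero).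
  { intros y. eapply isd_eq.
    - apply isd_plus. apply is_derive_pow, P_derive. apply is_derive_scal, hh_derive.
    - simpl. unfold zero; simpl. change R in y. match goal with |- ?a = ?b => change (@eq R a b) end. generalize (phi y) (P y). intros a b. ring. }
  destruct (Rtotal_order 0 x) as [H|[H|H]].
  - symmetry. apply (eq_is_derive (fun z => P z ^ 2 + 2 * hh z) 0 x); auto.
  - subst; auto.
  - apply (eq_is_derive (fun z => P z ^ 2 + 2 * hh z) x 0); auto.
Qed.

Lemma P0 : P 0 = 0.
Proof. unfold P. apply (RInt_point (V:=R_CompleteNormedModule)). Qed.

Lemma hh0 : hh 0 = PI / 4.
Proof.
  unfold hh. rewrite (RInt_ext _ (fun t => / (1 + t²))).
  2:{ intros t _. unfold hf, Rsqr. replace (- (0 ^ 2 * (1 + t ^ 2)) / 2) with 0 by field.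
      rewrite exp_0. Req. field. nra. }
  rewrite <- atan_1. replace (atan 1) with (atan 1 - atan 0) by (rewrite atan_0; ring).
  apply (is_RInt_unique (V:=R_CompleteNormedModule)).
  apply (is_RInt_derive (V:=R_CompleteNormedModule) atan).
  - intros; apply is_derive_atan.
  - intros. apply exd_cont. auto_derive. unfold Rsqr. nra.
Qed.

Lemma key_id x : P x ^ 2 + 2 * hh x = PI / 2.
Proof. rewrite F_const, P0, hh0. field. Qed.

Lemma hh_le x : hh x <= phi x.
Proof.
  unfold hh. apply Rle_trans with (RInt (fun _ => phi x) 0 1).
  - apply RInt_le; [lra| apply ex_RInt_hf | apply exri_cont; intros; apply continuous_const |].
    intros t Ht. unfold hf, phi. assert (Hp := onept_pos t).
    assert (E : exp (- (x ^ 2 * (1 + t ^ 2)) / 2) <= exp (- x ^ 2 / 2)).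
    { destruct (Req_dec (- (x ^ 2 * (1 + t ^ 2)) / 2) (- x ^ 2 / 2)) as [e|e].
      rewrite e; lra. apply Rlt_le, exp_increasing. nra. }
    assert (0 < exp (- (x ^ 2 * (1 + t ^ 2)) / 2)) by apply exp_pos.
    apply Rle_trans with (exp (- (x ^ 2 * (1 + t ^ 2)) / 2)); auto.
    unfold Rdiv. rewrite <- (Rmult_1_r (exp _)) at 2. apply Rmult_le_compat_l; [lra|].
    rewrite <- Rinv_1. apply Rinv_le_contravar; nra.
  - rewrite (RInt_const (V:=R_CompleteNormedModule)). unfold scal; simpl; unfold mult; simpl. lra.
Qed.

Lemma hh_pos x : 0 < hh x.
Proof.
  unfold hh. apply RInt_gt_0; [lra| |].
  - intros t _. unfold hf. apply Rdiv_lt_0_compat. apply exp_pos. apply onept_pos.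
  - intros; apply hf_cont.
Qed.

Definition I0 := sqrt (PI / 2).

Lemma I0_pos : 0 < I0.
Proof. unfold I0. apply sqrt_lt_R0. assert (H := PI_RGT_0). lra. Qed.

Lemma I0_sq : I0 * I0 = PI / 2.
Proof. unfold I0. apply sqrt_sqrt. assert (H := PI_RGT_0). lra. Qed.

Lemma P_ge0 x : 0 <= x -> 0 <= P x.
Proof.
  intros H. unfold P. apply RInt_ge_0; auto. apply ex_RInt_phi. intros; apply Rlt_le, phi_pos.
Qed.

Lemma P_lt x : P x < I0.
Proof.
  assert (K := key_id x). assert (Hh := hh_pos x). assert (I := I0_pos). assert (S := I0_sq).
  destruct (Rle_lt_dec (P x) 0). lra. nra.
Qed.

Lemma gap_bound x : 0 <= x -> I0 - P x <= 2 * phi x / I0.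
Proof.
  intros Hx. assert (K := key_id x). assert (Hh := hh_le x). assert (I := I0_pos).
  assert (S := I0_sq). assert (Pp := P_ge0 x Hx). assert (Pl := P_lt x).
  apply Rmult_le_reg_r with I0; auto. unfold Rdiv. rewrite Rmult_assoc, Rinv_l by lra.
  nra.
Qed.

Lemma phi_le_inv b : 0 < b -> phi b <= / b.
Proof.
  intros Hb. unfold phi. replace (- b ^ 2 / 2) with (- (b ^ 2 / 2)) by field.
  rewrite exp_Ropp. apply Rinv_le_contravar; auto.
  assert (H : 0 < b ^ 2 / 2) by (apply Rdiv_lt_0_compat; nra).
  assert (E := exp_ineq1_le (b ^ 2 / 2)). nra.
Qed.

Lemma P_conv eps : 0 < eps -> exists M, forall b, M < b -> Rabs (P b - I0) < eps.
Proof.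
  intros He. assert (I := I0_pos). exists (Rmax 0 (2 / (I0 * eps))). intros b Hb.
  assert (Hb0 : 0 < b) by (apply Rle_lt_trans with (Rmax 0 (2 / (I0 * eps))); auto; apply Rmax_l).
  assert (Hb1 : 2 / (I0 * eps) < b) by (apply Rle_lt_trans with (Rmax 0 (2 / (I0 * eps))); auto; apply Rmax_r).
  assert (G := gap_bound b (Rlt_le _ _ Hb0)). assert (Pl := P_lt b).
  assert (Ph := phi_le_inv b Hb0).
  rewrite Rabs_left by lra.
  assert (2 * phi b / I0 < eps).
  { apply Rle_lt_trans with (2 * / b / I0).
    - unfold Rdiv. apply Rmult_le_compat_r. apply Rlt_le, Rinv_0_lt_compat; auto. lra.
    - apply Rmult_lt_reg_r with (b * I0). nra.
      replace (2 * / b / I0 * (b * I0)) with 2 by (field; lra).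
      apply Rmult_lt_reg_r with (/ (I0 * eps)). apply Rinv_0_lt_compat; nra.
      replace (eps * (b * I0) * / (I0 * eps)) with b by (field; lra). unfold Rdiv in Hb1. lra. }
  lra.
Qed.

Lemma RInt_phi_diff a b : RInt phi a b = P b - P a.
Proof.
  unfold P. rewrite <- (RInt_Chasles (V:=R_CompleteNormedModule) phi a 0 b) by apply ex_RInt_phi.
  rewrite <- (opp_RInt_swap (V:=R_CompleteNormedModule) phi 0 a) by apply ex_RInt_phi.
  unfold plus, opp; simpl. ring.
Qed.

Lemma Qgen a : is_RInt_gen phi (at_point a) (Rbar_locally p_infty) (I0 - P a).
Proof.
  unfold is_RInt_gen, filterlimi, filter_le, filtermapi.
  intros Q [eps HQ].
  destruct (P_conv eps (cond_pos eps)) as [M HM].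
  apply Filter_prod with (fun x => x = a) (fun b => M < b).
  - reflexivity.
  - exists M. auto.
  - intros x y -> Hy. exists (RInt phi a y). split.
    + apply rint_correct, ex_RInt_phi.
    + apply HQ. change (Rabs (RInt phi a y - (I0 - P a)) < eps).
      rewrite RInt_phi_diff. replace (P y - P a - (I0 - P a)) with (P y - I0) by ring. auto.
Qed.

Lemma Qfun_eq a : Qfun a = / sqrt (2 * PI) * (I0 - P a).
Proof.
  unfold Qfun. f_equal. apply (is_RInt_gen_unique (V:=R_CompleteNormedModule)). apply Qgen.
Qed.

Definition C0 := / sqrt (2 * PI).
Definition T (y : R) := I0 - P y.

Lemma sqrt2PI : sqrt (2 * PI) = 2 * I0.
Proof. apply sqrt_lem_1. assert (H := PI_RGT_0); lra. assert (H := I0_pos); lra.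
  assert (S := I0_sq). nra. Qed.

Lemma P_odd x : P (- x) = - P x.
Proof.
  unfold P. replace (- x) with (-1 * x + 0) by ring.
  replace 0 with (-1 * 0 + 0) at 1 by ring.
  rewrite <- RInt_lin by (apply ex_RInt_phi).
  rewrite (RInt_ext _ (fun y => - phi y)).
  2:{ intros t _. unfold phi. Req. replace ((-1 * t + 0) ^ 2) with (t ^ 2) by ring. ring. }
  replace (-1 * 0 + 0) with 0 by ring.
  rewrite (RInt_ext (fun y => - phi y) (fun y => -1 * phi y)) by (intros; Req; ring).
  rewrite RInt_Rmult by apply ex_RInt_phi. ring.
Qed.

Lemma one_minus_Q x : 1 - Qfun x = C0 * T (- x).
Proof.
  rewrite Qfun_eq. unfold T, C0. rewrite P_odd, sqrt2PI.
  assert (H := I0_pos). field. lra.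
Qed.

Lemma T_pos y : 0 < T y.
Proof. unfold T. assert (H := P_lt y). lra. Qed.

Lemma T_derive y : is_derive T y (- phi y).
Proof.
  unfold T. eapply isd_eq.
  apply isd_plus. apply (is_derive_const (K:=R_AbsRing) (V:=R_NormedModule) I0 y).
  apply (is_derive_opp (K:=R_AbsRing) (V:=R_NormedModule)). apply P_derive.
  unfold zero, opp; simpl. Req. ring.
Qed.

Lemma phi_derive y : is_derive phi y (- y * phi y).
Proof. unfold phi. auto_derive. auto. change R in y. Req. replace (- y ^ 2 / 2) with (- (y * (y * 1)) * / 2) by field. field. Qed.

Lemma mills y : 0 < y -> y * T y <= phi y.
Proof.
  intros Hy.
  assert (Hb : forall b, y < b -> P b - P y <= phi y / y).
  { intros b Hyb. rewrite <- RInt_phi_diff.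
    apply Rle_trans with (RInt (fun t => / y * (t * phi t)) y b).
    - apply RInt_le. lra. apply ex_RInt_phi.
      apply exri_cont. intros. apply exd_cont. unfold phi. auto_derive. auto.
      intros t Ht. assert (Hp := phi_pos t).
      replace (phi t) with (/ y * (y * phi t)) at 1 by (field; lra).
      apply Rmult_le_compat_l. apply Rlt_le, Rinv_0_lt_compat; auto.
      apply Rmult_le_compat_r; lra.
    - rewrite RInt_Rmult.
      2:{ apply exri_cont. intros. apply exd_cont. unfold phi. auto_derive. auto. }
      rewrite (is_RInt_unique (V:=R_CompleteNormedModule) (fun t => t * phi t) y b
                 (minus (opp (phi b)) (opp (phi y)))).
      + unfold minus, plus, opp; simpl. assert (Hp := phi_pos b). unfold Rdiv.
        rewrite Rmult_comm. apply Rmult_le_compat_r. apply Rlt_le, Rinv_0_lt_compat; auto. lra.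
      + apply (is_RInt_derive (V:=R_CompleteNormedModule) (fun t => opp (phi t))).
        * intros x _. eapply isd_eq. apply (is_derive_opp (K:=R_AbsRing) (V:=R_NormedModule)).
          apply phi_derive. unfold opp; simpl. Req. ring.
        * intros. apply exd_cont. unfold phi. auto_derive. auto. }
  unfold T.
  destruct (Rle_lt_dec (I0 - P y) (phi y / y)) as [H|H].
  - apply Rmult_le_reg_r with (/ y). apply Rinv_0_lt_compat; auto.
    replace (y * (I0 - P y) * / y) with (I0 - P y) by (field; lra). exact H.
  - exfalso. destruct (P_conv (I0 - P y - phi y / y)) as [M HM]. lra.
    set (b := Rmax M y + 1).
    assert (b1 : M < b) by (unfold b; assert (M <= Rmax M y) by apply Rmax_l; lra).
    assert (b2 : y < b) by (unfold b; assert (y <= Rmax M y) by apply Rmax_r; lra).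
    specialize (HM b b1). specialize (Hb b b2).
    apply Rabs_def2 in HM. lra.
Qed.

Lemma isd_cpt (f : R -> R) x l : is_derive f x l -> continuity_pt f x.
Proof.
  intros H. apply continuity_pt_filterlim. apply exd_cont. exists l. exact H.
Qed.

Definition rr (y : R) := phi y / T y.

Lemma rr_derive y : is_derive rr y (phi y * (phi y - y * T y) / T y ^ 2).
Proof.
  unfold rr. eapply isd_eq. apply is_derive_div. apply phi_derive. apply T_derive.
  apply Rgt_not_eq, T_pos. assert (H := T_pos y). change R in y. Req. field. lra.
Qed.

Lemma rr_dpos y : 0 <= phi y * (phi y - y * T y) / T y ^ 2.
Proof.
  assert (Hp := phi_pos y). assert (Ht := T_pos y).
  assert (phi y - y * T y >= 0).
  { destruct (Rle_lt_dec y 0). nra. assert (Hm := mills y r). lra. }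
  apply Rmult_le_pos. apply Rmult_le_pos; lra.
  apply Rlt_le, Rinv_0_lt_compat. apply pow_lt; auto.
Qed.

Lemma rr_mono a b : a <= b -> rr a <= rr b.
Proof.
  intros Hab.
  destruct (MVT_gen rr a b (fun y => phi y * (phi y - y * T y) / T y ^ 2)) as [c [Hc E]].
  - intros; apply rr_derive.
  - intros. eapply isd_cpt. apply rr_derive.
  - assert (Hd := rr_dpos c). nra.
Qed.

Lemma lnT_derive y : is_derive (fun z => ln (T z)) y (- rr y).
Proof.
  eapply isd_eq. apply (is_derive_comp (K:=R_AbsRing) (V:=R_NormedModule) ln T).
  apply is_derive_ln, T_pos. apply T_derive.
  unfold scal, rr; simpl; unfold mult; simpl. assert (H := T_pos y). Req. field. lra.
Qed.

Lemma tangent y m : ln (T y) <= ln (T m) - rr m * (y - m).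
Proof.
  destruct (MVT_gen (fun z => ln (T z)) m y (fun z => - rr z)) as [c [Hc E]].
  - intros; apply lnT_derive.
  - intros. eapply isd_cpt. apply lnT_derive.
  - destruct (Rle_lt_dec m y) as [H|H].
    + rewrite Rmin_left, Rmax_right in Hc by lra.
      assert (rr m <= rr c) by (apply rr_mono; lra). nra.
    + rewrite Rmin_right, Rmax_left in Hc by lra.
      assert (rr c <= rr m) by (apply rr_mono; lra). nra.
Qed.

Lemma C0_pos : 0 < C0.
Proof. unfold C0. rewrite sqrt2PI. assert (H := I0_pos). apply Rinv_0_lt_compat. lra. Qed.

Lemma sumN_ext N f g : (forall i, (i < N)%nat -> f i = g i) -> sumN N f = sumN N g.
Proof. induction N; simpl; intros H; auto. rewrite IHN, H; auto. Qed.

Lemma prodN_ext N f g : (forall i, (i < N)%nat -> f i = g i) -> prodN N f = prodN N g.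
Proof. induction N; simpl; intros H; auto. rewrite IHN, H; auto. Qed.

Lemma sumN_le N f g : (forall i, (i < N)%nat -> f i <= g i) -> sumN N f <= sumN N g.
Proof. induction N; simpl; intros H. lra. apply Rplus_le_compat; auto. Qed.

Lemma sumN_lin N a b f : sumN N (fun i => a + b * f i) = INR N * a + b * sumN N f.
Proof.
  induction N. simpl; ring.
  change (sumN (S N) (fun i => a + b * f i)) with (sumN N (fun i => a + b * f i) + (a + b * f N)).
  change (sumN (S N) f) with (sumN N f + f N). rewrite IHN, S_INR. ring.
Qed.

Lemma prodN_exp N f : (forall i, (i < N)%nat -> 0 < f i) ->
  prodN N f = exp (sumN N (fun i => ln (f i))).
Proof.
  induction N; simpl; intros H. rewrite exp_0; auto.
  rewrite exp_plus, IHN by auto. rewrite exp_ln by auto. auto.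
Qed.

Theorem corollary1 (N n : nat) (k gamma : R) :
  (1 <= N)%nat -> (0 < n)%nat -> 0 < k -> 0 < gamma ->
  forall kv : nat -> R,
    (forall i, (i < N)%nat -> 0 <= kv i) ->
    sumN N kv = k ->
    prodN N (fun i => 1 - eps n (kv i) gamma)
      <= prodN N (fun _ => 1 - eps n (k / INR N) gamma).
Proof.
  intros HN _ _ _ kv _ Hsum.
  set (A := / 2 * log2 (1 + gamma)).
  set (B := log2 (exp 1) * sqrt (/ (2 * INR n) * (1 - / (1 + gamma) ^ 2))).
  set (al := / INR n * / B). set (be := - (A * / B)).
  assert (E : forall kk, 1 - eps n kk gamma = C0 * T (al * kk + be)).
  { intros kk. unfold eps. rewrite one_minus_Q. f_equal. f_equal.
    fold A. fold B. unfold al, be, Rdiv. ring. }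
  rewrite (prodN_ext _ _ (fun i => C0 * T (al * kv i + be))) by (intros; apply E).
  rewrite (prodN_ext _ (fun _ => 1 - eps n (k / INR N) gamma) (fun _ => C0 * T (al * (k / INR N) + be)))
    by (intros; apply E).
  assert (Pos : forall y, 0 < C0 * T y) by (intros; apply Rmult_lt_0_compat; [apply C0_pos|apply T_pos]).
  rewrite !prodN_exp by (intros; apply Pos).
  set (ym := al * (k / INR N) + be).
  assert (HN0 : 0 < INR N) by (apply lt_0_INR; lia).
  assert (S1 : sumN N (fun i => ln (C0 * T (al * kv i + be))) <=
               sumN N (fun i => (ln C0 + ln (T ym) + rr ym * ym) + (- rr ym * al) * kv i + (- rr ym * be))).
  { apply sumN_le. intros i _. rewrite ln_mult by (apply C0_pos || apply T_pos).
    assert (Ht := tangent (al * kv i + be) ym). lra. }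
  assert (S2 : sumN N (fun i => (ln C0 + ln (T ym) + rr ym * ym) + (- rr ym * al) * kv i + (- rr ym * be))
             = sumN N (fun _ => ln (C0 * T ym))).
  { rewrite (sumN_ext N _ (fun i => (ln C0 + ln (T ym) + rr ym * ym - rr ym * be) + (- rr ym * al) * kv i))
      by (intros; ring).
    rewrite (sumN_ext N (fun _ => ln (C0 * T ym)) (fun i => ln (C0 * T ym) + 0 * kv i)) by (intros; ring).
    rewrite !sumN_lin, Hsum. rewrite ln_mult by (apply C0_pos || apply T_pos).
    unfold ym. field. lra. }
  rewrite S2 in S1.
  destruct (Rle_lt_or_eq_dec _ _ S1) as [H|H].
  - apply Rlt_le, exp_increasing; auto.
  - rewrite H; lra.
Qed.
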